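(* Let $D=0.5$, let $p_0,p_1,p_2,\dots$ be the PWM basis functions defined in the context, and let $$g(\tau)=\begin{cases}1, & 0\le\tau<0.25,\\ 0, & 0.25\le\tau<0.75,\\ -1, & 0.75\le\tau\le1.\end{cases}$$ Then (i) $\int_0^1 p_k(\tau)\,g(\tau)\,d\tau=0$ for $k=0$ and for every odd $k\ge1$; and (ii) there is a constant $c>0$ such that for every $N_p\in\mathbb N$, the $L^2([0,1])$-orthogonal projection $g_h$ of $g$ onto $\mathrm{span}\{p_0,\dots,p_{N_p}\}$ satisfies $\|g-g_h\|_{L^2([0,1])}\ge c$. In particular, the PWM basis functions with $D=0.5$ do not span a dense subspace of $L^2([0,1])$.
   Context: The PWM basis functions with duty cycle $D\in(0,1)$ are functions of the relative time $\tau\in[0,1]$, defined recursively as follows. Set $p_0(\tau)=1$ on $[0,1]$, and $$p_1(\tau)=\begin{cases}\sqrt3\,\dfrac{2\tau-D}{D}, & 0\le\tau\le D,\\[2mm] \sqrt3\,\dfrac{1+D-2\tau}{1-D}, & D\le\tau\le 1.\end{cases}$$ For $k\ge2$, define $p_k^\star(\tau)=\int_D^\tau p_{k-1}(\tau')\,d\tau'$, then $$\overline p_k(\tau)=p_k^\star(\tau)-\sum_{l=0}^{k-1}p_l(\tau)\int_0^1 p_l(s)\,p_k^\star(s)\,ds,\qquad p_k(\tau)=\frac{\overline p_k(\tau)}{\left(\int_0^1\overline p_k(s)^2\,ds\right)^{1/2}}.$$ *)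

(* Defs.v *)
From Stdlib Require Import Reals Lra Lia List ClassicalEpsilon.
Import ListNotations.
Open Scope R_scope.

(* Total (signed, oriented) Riemann integral: the value of RiemannInt when
   f is Riemann integrable on [a,b] (with Stdlib's orientation convention
   when b < a); an unspecified value otherwise.  RiemannInt does not depend
   on the integrability proof (RiemannInt_P5), so this is well defined. *)
Definition integral (f : R -> R) (a b : R) : R :=
  epsilon (inhabits 0)
    (fun I => exists pr : Riemann_integrable f a b, RiemannInt pr = I).

Definition L2inner (f h : R -> R) : R := integral (fun s => f s * h s) 0 1.
Definition L2norm (f : R -> R) : R := sqrt (integral (fun s => f s ^ 2) 0 1).

Definition pwm_p0 : R -> R := fun _ => 1.

Definition pwm_p1 (D : R) : R -> R := fun t =>
  if Rle_dec t D then sqrt 3 * (2 * t - D) / D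
  else sqrt 3 * (1 + D - 2 * t) / (1 - D).

Definition pwm_next (D : R) (prev : list (R -> R)) : R -> R :=
  let plast := last prev pwm_p0 in
  let pstar := fun t => integral plast D t in
  let pbar := fun t =>
    pstar t - fold_right (fun pl acc => acc + pl t * L2inner pl pstar) 0 prev in
  fun t => pbar t / sqrt (integral (fun s => pbar s ^ 2) 0 1).

Fixpoint pwm_list (D : R) (n : nat) : list (R -> R) :=
  match n with
  | O => [pwm_p0]
  | S O => [pwm_p0; pwm_p1 D]
  | S (S k as m) => pwm_list D m ++ [pwm_next D (pwm_list D m)]
  end.

Definition pwm (D : R) (k : nat) : R -> R := nth k (pwm_list D k) pwm_p0.

Definition gtest (t : R) : R :=
  if Rlt_dec t (1/4) then 1 else if Rlt_dec t (3/4) then 0 else -1.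

Definition pwm_comb (D : R) (N : nat) (a : nat -> R) : R -> R :=
  fun t => sum_f_R0 (fun l => a l * pwm D l t) N.

Definition is_L2_projection (D : R) (N : nat) (f gh : R -> R) : Prop :=
  (exists a : nat -> R, forall t, 0 <= t <= 1 -> gh t = pwm_comb D N a t) /\
  (forall l, (l <= N)%nat -> L2inner (fun t => f t - gh t) (pwm D l) = 0).

(* Main.v *)
Require Import Defs.
From Stdlib Require Import Reals Lra Lia List ClassicalEpsilon.
From Coquelicot Require Import Coquelicot.
Import ListNotations.
Open Scope R_scope.

Definition cont (f : R -> R) := forall x, continuous f x.

Lemma integral_RInt f a b : ex_RInt f a b -> integral f a b = RInt f a b.
Proof.
  intros H. unfold integral.
  destruct (epsilon_spec (inhabits 0) (fun I => exists pr : Riemann_integrable f a b, RiemannInt pr = I)) as [pr Hpr].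
  { exists (RiemannInt (ex_RInt_Reals_0 _ _ _ H)); eauto. }
  rewrite <- Hpr, <- RInt_Reals. reflexivity.
Qed.

Lemma exc f a b : cont f -> ex_RInt f a b.
Proof. intros H; apply (@ex_RInt_continuous R_CompleteNormedModule); intros; apply H. Qed.

Lemma cont_const c : cont (fun _ => c).
Proof. intros x; apply continuous_const. Qed.
Lemma cont_id : cont (fun x => x).
Proof. intros x; apply continuous_id. Qed.
Lemma cont_plus f g : cont f -> cont g -> cont (fun x => f x + g x).
Proof. intros Hf Hg x; apply (continuous_plus f g); auto. Qed.
Lemma cont_mult f g : cont f -> cont g -> cont (fun x => f x * g x).
Proof. intros Hf Hg x; apply (continuous_mult f g); auto. Qed.
Lemma cont_opp f : cont f -> cont (fun x => - f x).
Proof. intros Hf x. eapply continuous_ext. 2: apply (cont_mult (fun _ => -1) f (cont_const _) Hf).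
  intros; simpl; ring. Qed.
Lemma cont_minus f g : cont f -> cont g -> cont (fun x => f x - g x).
Proof. intros. apply cont_plus; auto. apply cont_opp; auto. Qed.
Lemma cont_ext f g : (forall x, f x = g x) -> cont f -> cont g.
Proof. intros E H x. eapply continuous_ext; eauto. Qed.

Lemma cont_RInt f a : cont f -> cont (fun t => RInt f a t).
Proof.
  intros Hf x. apply (ex_derive_continuous (K:=R_AbsRing) (V:=R_NormedModule)). exists (f x).
  apply is_derive_RInt with a. apply filter_forall. intros y.
  apply (RInt_correct (V:=R_CompleteNormedModule)). apply exc; auto. apply Hf.
Qed.

Lemma Chas f a b c : ex_RInt f a b -> ex_RInt f b c -> RInt f a b + RInt f b c = RInt f a c.
Proof. intros; exact (RInt_Chasles f a b c H H0). Qed.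
Lemma Swap f a b : ex_RInt f a b -> RInt f b a = - RInt f a b :> R.
Proof. intros H. symmetry. exact (opp_RInt_swap f a b H). Qed.
Lemma RIplus f g a b : ex_RInt f a b -> ex_RInt g a b -> RInt (fun x => f x + g x) a b = RInt f a b + RInt g a b :> R.
Proof. intros; exact (RInt_plus f g a b H H0). Qed.
Lemma RIscal f a b l : ex_RInt f a b -> RInt (fun x => l * f x) a b = l * RInt f a b :> R.
Proof. intros; exact (RInt_scal f a b l H). Qed.
Lemma RIconst a b c : RInt (fun _ => c) a b = c * (b - a) :> R.
Proof. rewrite RInt_const. unfold scal; simpl; unfold mult; simpl. ring. Qed.

Lemma refl f c a b : cont f -> RInt (fun y => f (c - y)) a b = RInt f (c - b) (c - a) :> R.
Proof.
  intros Hf.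
  assert (H := RInt_comp_lin f (-1) c a b (exc _ _ _ Hf)).
  assert (E : RInt (fun y => scal (-1) (f (-1 * y + c))) a b = - RInt (fun y => f (c - y)) a b).
  { replace (- RInt (fun y => f (c - y)) a b) with (-1 * RInt (fun y => f (c - y)) a b) by ring.
    rewrite <- RIscal.
    apply RInt_ext. intros. unfold scal; simpl; unfold mult; simpl. replace (-1*x+c) with (c-x) by ring. ring.
    apply exc. intros x. apply (continuous_comp (fun y => c - y) f). apply (cont_minus (fun _ => c) (fun y => y)).
    apply cont_const. apply cont_id. apply Hf. }
  assert (H2 : - RInt (fun y => f (c-y)) a b = RInt f (-1*a+c) (-1*b+c)) by (rewrite <- E; exact H).
  clear H E. rename H2 into H. replace (-1*a+c) with (c-a) in H by ring. replace (-1*b+c) with (c-b) in H by ring.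
  rewrite (Swap f (c-a) (c-b)). lra. apply exc; auto.
Qed.

Lemma sym_int f c e a b a' b' : cont f -> a' = c - b -> b' = c - a ->
  (forall t, Rmin a b <= t <= Rmax a b -> f (c - t) = e * f t) -> RInt f a' b' = e * RInt f a b :> R.
Proof.
  intros Hf -> -> H. rewrite <- refl by auto. rewrite <- RIscal by (apply exc; auto).
  apply RInt_ext. intros; apply H; lra.
Qed.

Ltac solve_cont := repeat first [ assumption | apply cont_const | apply cont_id | apply cont_plus | apply cont_minus | apply cont_mult | apply cont_opp ].
Ltac solve_ex := apply exc; solve_cont.


Lemma pwm_len D m : length (pwm_list D m) = S m.
Proof.
  assert (forall m, length (pwm_list D m) = S m /\ length (pwm_list D (S m)) = S (S m)).
  { induction m0 as [|m0 [IH1 IH2]]. split; reflexivity. split. exact IH2.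
    change (pwm_list D (S (S m0))) with (pwm_list D (S m0) ++ [pwm_next D (pwm_list D (S m0))]).
    rewrite length_app, IH2. simpl. lia. }
  apply H.
Qed.

Lemma pwm_SS D n : pwm D (S (S n)) = pwm_next D (pwm_list D (S n)).
Proof.
  unfold pwm at 1. change (pwm_list D (S (S n))) with (pwm_list D (S n) ++ [pwm_next D (pwm_list D (S n))]).
  rewrite app_nth2; rewrite pwm_len. rewrite Nat.sub_diag. reflexivity. lia.
Qed.

Lemma pwm_list_map D n : pwm_list D n = map (pwm D) (seq 0 (S n)).
Proof.
  induction n as [|n IH]. reflexivity.
  destruct n. reflexivity.
  change (pwm_list D (S (S n))) with (pwm_list D (S n) ++ [pwm_next D (pwm_list D (S n))]).
  rewrite (seq_S (S (S n)) 0), map_app, <- IH. simpl. rewrite pwm_SS. reflexivity.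
Qed.

Lemma pwm_last D n : last (pwm_list D (S n)) pwm_p0 = pwm D (S n).
Proof. rewrite pwm_list_map, seq_S, map_app. cbn [map]. rewrite last_last. reflexivity. Qed.


Definition xE (f : R -> R) := forall t, 0 <= t <= 1 -> f (1 - t) = f t.
Definition xO (f : R -> R) := forall t, 0 <= t <= 1 -> f (1 - t) = - f t.
Definition TS (f : R -> R) := forall t, 0 <= t <= 1/2 -> f (1/2 - t) = f t.
Definition TA (f : R -> R) := forall t, 0 <= t <= 1/2 -> f (1/2 - t) = - f t.
Definition clsA f := xE f /\ TA f.
Definition clsB f := xO f /\ TS f.
Definition cls (k : nat) (f : R -> R) : Prop :=
  match k with O => forall t, f t = 1 | _ => if Nat.even k then clsB f else clsA f end.

Lemma clsA_0 : clsA (fun _ => 0).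
Proof. split; intros t _; lra. Qed.
Lemma clsB_0 : clsB (fun _ => 0).
Proof. split; intros t _; lra. Qed.
Lemma clsA_plus f g : clsA f -> clsA g -> clsA (fun t => f t + g t).
Proof. intros [A1 A2] [B1 B2]; split; intros t Ht; rewrite ?A1, ?B1, ?A2, ?B2 by auto; ring. Qed.
Lemma clsB_plus f g : clsB f -> clsB g -> clsB (fun t => f t + g t).
Proof. intros [A1 A2] [B1 B2]; split; intros t Ht; rewrite ?A1, ?B1, ?A2, ?B2 by auto; ring. Qed.
Lemma clsA_minus f g : clsA f -> clsA g -> clsA (fun t => f t - g t).
Proof. intros [A1 A2] [B1 B2]; split; intros t Ht; rewrite ?A1, ?B1, ?A2, ?B2 by auto; ring. Qed.
Lemma clsB_minus f g : clsB f -> clsB g -> clsB (fun t => f t - g t).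
Proof. intros [A1 A2] [B1 B2]; split; intros t Ht; rewrite ?A1, ?B1, ?A2, ?B2 by auto; ring. Qed.
Lemma clsA_sc f c : clsA f -> clsA (fun t => f t * c).
Proof. intros [A1 A2]; split; intros t Ht; rewrite ?A1, ?A2 by auto; ring. Qed.
Lemma clsB_sc f c : clsB f -> clsB (fun t => f t * c).
Proof. intros [A1 A2]; split; intros t Ht; rewrite ?A1, ?A2 by auto; ring. Qed.
Lemma clsA_div f c : clsA f -> clsA (fun t => f t / c).
Proof. intros; unfold Rdiv; apply clsA_sc; auto. Qed.
Lemma clsB_div f c : clsB f -> clsB (fun t => f t / c).
Proof. intros; unfold Rdiv; apply clsB_sc; auto. Qed.

Lemma fold_P (P : (R -> R) -> Prop) (c : (R -> R) -> R) (l : list (R -> R)) :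
  P (fun _ => 0) -> (forall f g, P f -> P g -> P (fun t => f t + g t)) ->
  (forall pl, In pl l -> P (fun t => pl t * c pl)) ->
  P (fun t => fold_right (fun pl acc => acc + pl t * c pl) 0 l).
Proof.
  intros H0 Hp. induction l as [|a l IH]; intros Hl. exact H0.
  simpl. apply (Hp (fun t => fold_right (fun pl acc => acc + pl t * c pl) 0 l) (fun t => a t * c a)).
  apply IH; intros; apply Hl; simpl; auto. apply Hl; simpl; auto.
Qed.

Lemma mm a b lo hi t : lo <= a <= hi -> lo <= b <= hi -> Rmin a b <= t <= Rmax a b -> lo <= t <= hi.
Proof. unfold Rmin, Rmax; destruct Rle_dec; lra. Qed.

Lemma IO f : cont f -> xO f -> RInt f 0 1 = 0 :> R.
Proof.
  intros Hf H. assert (E := sym_int f 1 (-1) 0 1 0 1 Hf ltac:(lra) ltac:(lra)).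
  assert (RInt f 0 1 = -1 * RInt f 0 1). apply E. intros t Ht. rewrite Rmin_left, Rmax_right in Ht by lra.
  rewrite H by lra; ring. lra.
Qed.

Lemma IE f : cont f -> xE f -> RInt f 0 1 = 2 * RInt f 0 (1/2) :> R.
Proof.
  intros Hf H. rewrite <- (Chas f 0 (1/2) 1) by (apply exc; auto).
  rewrite (sym_int f 1 1 0 (1/2) (1/2) 1 Hf ltac:(lra) ltac:(lra)).
  { ring. }
  intros t Ht. rewrite Rmin_left, Rmax_right in Ht by lra. rewrite H by lra; ring.
Qed.


Lemma pst_B p : cont p -> clsA p -> clsB (fun t => RInt p (1/2) t).
Proof.
  intros Hc [HE HT]. split.
  - intros t Ht. simpl. rewrite Swap by (apply exc; auto).
    rewrite (sym_int p 1 1 (1/2) t (1-t) (1/2) Hc ltac:(lra) ltac:(lra)). ring.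
    intros s Hs. assert (0 <= s <= 1) by (apply (mm (1/2) t 0 1 s); lra). rewrite HE by lra; ring.
  - intros t Ht. simpl. rewrite <- (Chas p (1/2) t (1/2 - t)) by (apply exc; auto).
    assert (RInt p t (1/2 - t) = 0).
    { assert (RInt p t (1/2 - t) = -1 * RInt p t (1/2 - t)).
      apply (sym_int p (1/2) (-1) t (1/2-t) t (1/2 - t) Hc ltac:(lra) ltac:(lra)).
      intros s Hs. assert (0 <= s <= 1/2) by (apply (mm t (1/2-t) 0 (1/2) s); lra). rewrite HT by lra; ring.
      lra. }
    rewrite H. ring.
Qed.

Lemma pst_A p : cont p -> clsB p -> xE (fun t => RInt p (1/2) t) /\
  forall t, 0 <= t <= 1/2 -> RInt p (1/2) (1/2 - t) + RInt p (1/2) t = RInt p (1/2) 0.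
Proof.
  intros Hc [HO HT]. split.
  - intros t Ht. simpl. rewrite Swap by (apply exc; auto).
    rewrite (sym_int p 1 (-1) (1/2) t (1-t) (1/2) Hc ltac:(lra) ltac:(lra)). ring.
    intros s Hs. assert (0 <= s <= 1) by (apply (mm (1/2) t 0 1 s); lra). rewrite HO by lra; ring.
  - intros t Ht. rewrite (Swap p (1/2 - t) (1/2)) by (apply exc; auto).
    rewrite (sym_int p (1/2) 1 0 t (1/2-t) (1/2) Hc ltac:(lra) ltac:(lra)).
    2:{ intros s Hs. assert (0 <= s <= 1/2) by (apply (mm 0 t 0 (1/2) s); lra). rewrite HT by lra; ring. }
    rewrite <- (Chas p (1/2) 0 t) by (apply exc; auto). ring.
Qed.

Lemma mean_A q : cont q -> xE q -> (forall t, 0 <= t <= 1/2 -> q (1/2 - t) + q t = q 0) ->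
  RInt q 0 1 = q 0 / 2 :> R.
Proof.
  intros Hc HE HT. rewrite IE by auto.
  assert (E1 : RInt (fun y => q (1/2 - y)) 0 (1/2) = RInt q 0 (1/2) :> R).
  { rewrite refl by auto. f_equal; lra. }
  assert (E2 : RInt (fun y => q (1/2 - y)) 0 (1/2) = RInt (fun y => q 0 + -1 * q y) 0 (1/2) :> R).
  { apply RInt_ext. intros x Hx. rewrite Rmin_left, Rmax_right in Hx by lra.
    assert (H := HT x ltac:(lra)). lra. }
  rewrite RIplus in E2 by solve_ex.
  rewrite RIconst, RIscal in E2 by solve_ex. lra.
Qed.


Definition pst D L := fun t => integral (last L pwm_p0) D t.
Definition fldc (c : (R -> R) -> R) (L : list (R -> R)) t :=
  fold_right (fun pl acc => acc + pl t * c pl) 0 L.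

Lemma next_eq D L : exists Z, forall t,
  pwm_next D L t = (pst D L t - fldc (fun pl => L2inner pl (pst D L)) L t) / Z.
Proof. eexists; intros; reflexivity. Qed.

Lemma clsA_ext f g : (forall t, f t = g t) -> clsA f -> clsA g.
Proof. intros E [H1 H2]; split; intros t Ht; rewrite <- !E; auto. Qed.
Lemma clsB_ext f g : (forall t, f t = g t) -> clsB f -> clsB g.
Proof. intros E [H1 H2]; split; intros t Ht; rewrite <- !E; auto. Qed.

Lemma p1_form t : pwm_p1 (1/2) t = sqrt 3 * (1 - 4 * Rabs (t - 1/2)).
Proof.
  unfold pwm_p1. destruct Rle_dec.
  - rewrite Rabs_left1 by lra. field.
  - rewrite Rabs_right by lra. field.
Qed.

Lemma cont_abs f : cont f -> cont (fun x => Rabs (f x)).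
Proof. intros H x. apply (continuous_comp f Rabs). apply H. apply continuous_Rabs. Qed.

Lemma base1 : cont (pwm (1/2) 1) /\ clsA (pwm (1/2) 1).
Proof.
  change (pwm (1/2) 1) with (pwm_p1 (1/2)). split.
  - apply (cont_ext (fun t => sqrt 3 * (1 - 4 * Rabs (t - 1/2)))).
    intros; rewrite p1_form; auto.
    apply cont_mult. apply cont_const. apply cont_minus. apply cont_const.
    apply cont_mult. apply cont_const. apply cont_abs. apply cont_minus. apply cont_id. apply cont_const.
  - split; intros t Ht; rewrite !p1_form.
    + replace (1 - t - 1/2) with (- (t - 1/2)) by lra. rewrite Rabs_Ropp. auto.
    + rewrite (Rabs_left1 (t - 1/2)) by lra. rewrite (Rabs_left1 (1/2 - t - 1/2)) by lra. field.
Qed.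

Lemma inL D m pl : In pl (pwm_list D m) -> exists j, (j <= m)%nat /\ pl = pwm D j.
Proof.
  rewrite pwm_list_map, in_map_iff. intros [j [<- Hj]]. apply in_seq in Hj. exists j; split; auto; lia.
Qed.

Lemma L2_eq pl f : cont pl -> cont f -> L2inner pl f = RInt (fun s => pl s * f s) 0 1.
Proof. intros. unfold L2inner. apply integral_RInt. solve_ex. Qed.

Lemma cls_cases j f : cls j f -> (xE f /\ (j = 0%nat \/ clsA f)) \/ clsB f.
Proof.
  unfold cls. destruct j as [|j].
  - intros H. left. split; [intros t _; rewrite !H; auto | auto].
  - destruct (Nat.even (S j)); intros H. right; auto. left; split; [apply H| auto].
Qed.

Lemma step m : (forall j, (j <= S m)%nat -> cont (pwm (1/2) j) /\ cls j (pwm (1/2) j)) ->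
  cont (pwm (1/2) (S (S m))) /\ cls (S (S m)) (pwm (1/2) (S (S m))).
Proof.
  intros IH.
  rewrite pwm_SS.
  set (L := pwm_list (1/2) (S m)).
  destruct (next_eq (1/2) L) as [Z HZ].
  set (p := pwm (1/2) (S m)).
  destruct (IH (S m) (le_n _)) as [Hpc Hpcls]. fold p in Hpc, Hpcls.
  assert (Hps : forall t, pst (1/2) L t = RInt p (1/2) t).
  { intros t. unfold pst, L. rewrite pwm_last. apply integral_RInt. apply exc. exact Hpc. }
  set (ps := pst (1/2) L) in *.
  assert (Hpsc : cont ps).
  { apply (cont_ext (fun t => RInt p (1/2) t)); [intros; now rewrite Hps | apply cont_RInt; auto]. }
  set (c := fun pl => L2inner pl ps) in *.
  assert (Hel : forall pl, In pl L -> exists j, (j <= S m)%nat /\ cont pl /\ cls j pl).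
  { intros pl Hin. destruct (inL _ _ _ Hin) as [j [Hj ->]]. exists j. split; [auto | apply IH; auto]. }
  assert (Hfc : cont (fun t => fldc c L t)).
  { unfold fldc. apply (fold_P cont c L). apply cont_const. intros; apply cont_plus; auto.
    intros pl Hin. destruct (Hel pl Hin) as [j [_ [Hc _]]]. apply cont_mult; auto. apply cont_const. }
  split.
  - apply (cont_ext (fun t => (ps t - fldc c L t) / Z)). intros; now rewrite HZ.
    unfold Rdiv. apply (cont_mult (fun t => ps t - fldc c L t) (fun _ => /Z)).
    apply cont_minus; auto. apply cont_const.
  - change (if Nat.even m then clsB (pwm_next (1/2) L) else clsA (pwm_next (1/2) L)).
    change (if Nat.even (S m) then clsB p else clsA p) in Hpcls.
    rewrite Nat.even_succ, <- Nat.negb_even in Hpcls.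
    destruct (Nat.even m) eqn:Em; simpl in Hpcls.
    + assert (psB : clsB ps).
      { apply (clsB_ext (fun t => RInt p (1/2) t)). intros; now rewrite Hps. apply pst_B; auto. }
      apply (clsB_ext (fun t => (ps t - fldc c L t) / Z)). intros; now rewrite HZ.
      apply clsB_div. apply clsB_minus. exact psB.
      unfold fldc. apply (fold_P clsB c L clsB_0). intros; apply clsB_plus; auto.
      intros pl Hin. destruct (Hel pl Hin) as [j [_ [Hc Hcl]]].
      destruct (cls_cases j pl Hcl) as [[HE _] | HB].
      * assert (H0 : c pl = 0).
        { unfold c. rewrite L2_eq by auto. apply IO. solve_cont.
          intros t Ht. rewrite HE, (proj1 psB) by auto; ring. }
        rewrite H0. split; red; intros; ring.
      * apply clsB_sc; auto.
    + destruct (pst_A p Hpc Hpcls) as [A1 A2].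
      assert (psE : xE ps). { intros t Ht. rewrite !Hps. apply A1; auto. }
      assert (psQ : forall t, 0 <= t <= 1/2 -> ps (1/2 - t) + ps t = ps 0).
      { intros t Ht. rewrite !Hps. apply A2; auto. }
      assert (Hc0 : c pwm_p0 = ps 0 / 2).
      { unfold c. rewrite L2_eq. 2: apply cont_const. 2: auto.
        rewrite <- (mean_A ps) by auto. apply RInt_ext. intros x _; unfold pwm_p0; apply Rmult_1_l. }
      set (L' := map (pwm (1/2)) (seq 1 (S m))).
      assert (HL : L = pwm_p0 :: L'). { unfold L, L'. rewrite pwm_list_map. reflexivity. }
      assert (Hfld : forall t, fldc c L t = fldc c L' t + c pwm_p0).
      { intros t. rewrite HL. unfold fldc. simpl. unfold pwm_p0. ring. }
      apply (clsA_ext (fun t => ((ps t - c pwm_p0) - fldc c L' t) / Z)).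
      { intros; rewrite HZ, Hfld. unfold Rdiv; ring. }
      apply clsA_div, clsA_minus.
      * split. intros t Ht. now rewrite psE by auto.
        intros t Ht. assert (H := psQ t Ht). rewrite Hc0. lra.
      * unfold fldc. apply (fold_P clsA c L' clsA_0). intros; apply clsA_plus; auto.
        intros pl Hin.
        assert (Hj : exists j, (1 <= j <= S m)%nat /\ pl = pwm (1/2) j).
        { unfold L' in Hin. apply in_map_iff in Hin. destruct Hin as [j [<- Hj]]. apply in_seq in Hj.
          exists j; split; auto; lia. }
        destruct Hj as [j [Hj ->]].
        destruct (IH j ltac:(lia)) as [Hc Hcl].
        destruct (cls_cases j _ Hcl) as [[HE [H0|HA]] | [HO HT]].
        -- lia.
        -- apply clsA_sc; auto.
        -- assert (H0 : c (pwm (1/2) j) = 0).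
           { unfold c. rewrite L2_eq by auto. apply IO. solve_cont.
             intros t Ht. rewrite HO, psE by auto; ring. }
           rewrite H0. split; red; intros; ring.
Qed.

Lemma inv_all n : forall j, (j <= n)%nat -> cont (pwm (1/2) j) /\ cls j (pwm (1/2) j).
Proof.
  induction n as [|n IHn]; intros j Hj.
  - assert (j = 0%nat) by lia. subst. split. change (cont (fun _ => 1)). apply cont_const. intros t; reflexivity.
  - destruct (Nat.eq_dec j (S n)) as [->|Hne].
    + destruct n as [|n].
      * destruct base1 as [B1 B2]. split; auto.
      * apply step. intros; apply IHn; lia.
    + apply IHn; lia.
Qed.


Definition Kq (f : R -> R) : R :=
  RInt f 0 (1/4) - RInt f (1/4) (1/2) + RInt f (1/2) (3/4) - RInt f (3/4) 1.

Lemma E_refl f : cont f -> xE f ->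
  RInt f (3/4) 1 = RInt f 0 (1/4) :> R /\ RInt f (1/2) (3/4) = RInt f (1/4) (1/2) :> R.
Proof.
  intros Hc HE. split.
  - rewrite (sym_int f 1 1 0 (1/4) (3/4) 1 Hc ltac:(lra) ltac:(lra)). ring.
    intros t Ht. assert (0 <= t <= 1) by (apply (mm 0 (1/4) 0 1 t); lra). rewrite HE by auto; ring.
  - rewrite (sym_int f 1 1 (1/4) (1/2) (1/2) (3/4) Hc ltac:(lra) ltac:(lra)). ring.
    intros t Ht. assert (0 <= t <= 1) by (apply (mm (1/4) (1/2) 0 1 t); lra). rewrite HE by auto; ring.
Qed.

Lemma Kq_cls j f : cont f -> cls j f -> Kq f = 0.
Proof.
  intros Hc Hcl. unfold Kq. destruct (cls_cases j f Hcl) as [[HE _] | [HO HT]].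
  - destruct (E_refl f Hc HE) as [E1 E2]. rewrite E1, E2. ring.
  - rewrite (sym_int f 1 (-1) 0 (1/4) (3/4) 1 Hc ltac:(lra) ltac:(lra)).
    2:{ intros t Ht. assert (0 <= t <= 1) by (apply (mm 0 (1/4) 0 1 t); lra). rewrite HO by auto; ring. }
    rewrite (sym_int f 1 (-1) (1/4) (1/2) (1/2) (3/4) Hc ltac:(lra) ltac:(lra)).
    2:{ intros t Ht. assert (0 <= t <= 1) by (apply (mm (1/4) (1/2) 0 1 t); lra). rewrite HO by auto; ring. }
    rewrite (sym_int f (1/2) 1 0 (1/4) (1/4) (1/2) Hc ltac:(lra) ltac:(lra)).
    2:{ intros t Ht. assert (0 <= t <= 1/2) by (apply (mm 0 (1/4) 0 (1/2) t); lra). rewrite HT by auto; ring. }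
    ring.
Qed.

Lemma Kq_ext f g : (forall t, f t = g t) -> Kq f = Kq g.
Proof. intros E. unfold Kq. rewrite !(RInt_ext f g) by (intros; apply E). reflexivity. Qed.

Lemma Kq_plus f g : cont f -> cont g -> Kq (fun t => f t + g t) = Kq f + Kq g.
Proof. intros. unfold Kq. rewrite !RIplus by solve_ex. ring. Qed.

Lemma Kq_scal f l : cont f -> Kq (fun t => l * f t) = l * Kq f.
Proof. intros. unfold Kq. rewrite !RIscal by solve_ex. ring. Qed.

Lemma comb_ok N a : cont (pwm_comb (1/2) N a) /\ Kq (pwm_comb (1/2) N a) = 0.
Proof.
  induction N as [|N [IH1 IH2]].
  - destruct (inv_all 0 0 (le_n _)) as [C1 C2].
    split.
    + apply (cont_ext (fun t => a 0%nat * pwm (1/2) 0 t)). intros; reflexivity. solve_cont.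
    + rewrite (Kq_ext _ (fun t => a 0%nat * pwm (1/2) 0 t)) by (intros; reflexivity).
      rewrite Kq_scal by auto. rewrite (Kq_cls 0 _ C1 C2). ring.
  - destruct (inv_all (S N) (S N) (le_n _)) as [C1 C2].
    assert (E : forall t, pwm_comb (1/2) (S N) a t = pwm_comb (1/2) N a t + a (S N) * pwm (1/2) (S N) t).
    { intros; reflexivity. }
    split.
    + apply (cont_ext _ _ (fun t => eq_sym (E t))). solve_cont.
    + rewrite (Kq_ext _ _ E). rewrite Kq_plus by solve_cont. rewrite Kq_scal by auto.
      rewrite IH2, (Kq_cls _ _ C1 C2). ring.
Qed.

Lemma piece4 F F1 F2 F3 F4 : cont F1 -> cont F2 -> cont F3 -> cont F4 ->
  (forall x, 0 < x < 1/4 -> F x = F1 x) -> (forall x, 1/4 < x < 1/2 -> F x = F2 x) ->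
  (forall x, 1/2 < x < 3/4 -> F x = F3 x) -> (forall x, 3/4 < x < 1 -> F x = F4 x) ->
  ex_RInt F 0 1 /\ RInt F 0 1 = RInt F1 0 (1/4) + RInt F2 (1/4) (1/2) + RInt F3 (1/2) (3/4) + RInt F4 (3/4) 1 :> R.
Proof.
  intros C1 C2 C3 C4 H1 H2 H3 H4.
  assert (X1 : ex_RInt F 0 (1/4)).
  { apply (ex_RInt_ext F1). intros x Hx; rewrite Rmin_left, Rmax_right in Hx by lra; symmetry; auto. apply exc; auto. }
  assert (X2 : ex_RInt F (1/4) (1/2)).
  { apply (ex_RInt_ext F2). intros x Hx; rewrite Rmin_left, Rmax_right in Hx by lra; symmetry; auto. apply exc; auto. }
  assert (X3 : ex_RInt F (1/2) (3/4)).
  { apply (ex_RInt_ext F3). intros x Hx; rewrite Rmin_left, Rmax_right in Hx by lra; symmetry; auto. apply exc; auto. }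
  assert (X4 : ex_RInt F (3/4) 1).
  { apply (ex_RInt_ext F4). intros x Hx; rewrite Rmin_left, Rmax_right in Hx by lra; symmetry; auto. apply exc; auto. }
  assert (R1 : RInt F 0 (1/4) = RInt F1 0 (1/4) :> R).
  { apply RInt_ext. intros x Hx; rewrite Rmin_left, Rmax_right in Hx by lra; auto. }
  assert (R2 : RInt F (1/4) (1/2) = RInt F2 (1/4) (1/2) :> R).
  { apply RInt_ext. intros x Hx; rewrite Rmin_left, Rmax_right in Hx by lra; auto. }
  assert (R3 : RInt F (1/2) (3/4) = RInt F3 (1/2) (3/4) :> R).
  { apply RInt_ext. intros x Hx; rewrite Rmin_left, Rmax_right in Hx by lra; auto. }
  assert (R4 : RInt F (3/4) 1 = RInt F4 (3/4) 1 :> R).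
  { apply RInt_ext. intros x Hx; rewrite Rmin_left, Rmax_right in Hx by lra; auto. }
  assert (X12 := ex_RInt_Chasles F _ _ _ X1 X2).
  assert (X34 := ex_RInt_Chasles F _ _ _ X3 X4).
  split. exact (ex_RInt_Chasles F _ _ _ X12 X34).
  rewrite <- (Chas F 0 (1/2) 1 X12 X34), <- (Chas F 0 (1/4) (1/2) X1 X2), <- (Chas F (1/2) (3/4) 1 X3 X4).
  rewrite R1, R2, R3, R4. ring.
Qed.


Lemma g1 x : 0 < x < 1/4 -> gtest x = 1.
Proof. intros; unfold gtest; destruct Rlt_dec; [|destruct Rlt_dec]; lra. Qed.
Lemma g2 x : 1/4 < x < 1/2 -> gtest x = 0.
Proof. intros; unfold gtest; destruct Rlt_dec; [|destruct Rlt_dec]; lra. Qed.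
Lemma g3 x : 1/2 < x < 3/4 -> gtest x = 0.
Proof. intros; unfold gtest; destruct Rlt_dec; [|destruct Rlt_dec]; lra. Qed.
Lemma g4 x : 3/4 < x < 1 -> gtest x = -1.
Proof. intros; unfold gtest; destruct Rlt_dec; [|destruct Rlt_dec]; lra. Qed.

Lemma qbound S (g e q1 q2 : R) : cont S -> q1 < q2 -> e * e = 1 ->
  RInt (fun t => (g - S t) ^ 2) q1 q2 >= - e * RInt S q1 q2 + (e * g - 1/4) * (q2 - q1).
Proof.
  intros Hc Hq He.
  assert (E : RInt (fun t => - e * S t + (e * g - 1/4)) q1 q2 = - e * RInt S q1 q2 + (e * g - 1/4) * (q2 - q1) :> R).
  { rewrite RIplus by solve_ex. rewrite RIscal by solve_ex. rewrite RIconst. reflexivity. }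
  rewrite <- E. apply Rle_ge. apply RInt_le. lra. solve_ex. apply exc. intros x. 
  apply (cont_ext (fun t => (g - S t) * ((g - S t) * 1))). intros; simpl; reflexivity. solve_cont.
  intros x _. assert (H0 := pow2_ge_0 (g - S x - e/2)). nra.
Qed.

Lemma lower N a u : (forall t, 0 <= t <= 1 -> u t = gtest t - pwm_comb (1/2) N a t) ->
  ex_RInt (fun t => u t ^ 2) 0 1 /\ RInt (fun t => u t ^ 2) 0 1 >= 1/4.
Proof.
  intros Hu. destruct (comb_ok N a) as [Sc SK].
  set (S := pwm_comb (1/2) N a) in *.
  assert (CF : forall g, cont (fun t => (g - S t) ^ 2)).
  { intros g. apply (cont_ext (fun t => (g - S t) * ((g - S t) * 1))). intros; simpl; reflexivity. solve_cont. }
  destruct (piece4 (fun t => u t ^ 2) (fun t => (1 - S t) ^ 2) (fun t => (0 - S t) ^ 2)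
     (fun t => (0 - S t) ^ 2) (fun t => (-1 - S t) ^ 2) (CF 1) (CF 0) (CF 0) (CF (-1))) as [X R].
  - intros x Hx. rewrite Hu by lra. rewrite g1 by lra. reflexivity.
  - intros x Hx. rewrite Hu by lra. rewrite g2 by lra. reflexivity.
  - intros x Hx. rewrite Hu by lra. rewrite g3 by lra. reflexivity.
  - intros x Hx. rewrite Hu by lra. rewrite g4 by lra. reflexivity.
  - split. exact X. rewrite R.
    assert (B1 := qbound S 1 1 0 (1/4) Sc ltac:(lra) ltac:(lra)).
    assert (B2 := qbound S 0 (-1) (1/4) (1/2) Sc ltac:(lra) ltac:(lra)).
    assert (B3 := qbound S 0 1 (1/2) (3/4) Sc ltac:(lra) ltac:(lra)).
    assert (B4 := qbound S (-1) (-1) (3/4) 1 Sc ltac:(lra) ltac:(lra)).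
    unfold Kq in SK. lra.
Qed.

Lemma xE_gint f : cont f -> xE f -> L2inner f gtest = 0.
Proof.
  intros Hc HE. unfold L2inner.
  destruct (piece4 (fun s => f s * gtest s) f (fun _ => 0) (fun _ => 0) (fun t => -1 * f t)) as [X R]; try solve_cont.
  - intros x Hx. rewrite g1 by lra. ring.
  - intros x Hx. rewrite g2 by lra. ring.
  - intros x Hx. rewrite g3 by lra. ring.
  - intros x Hx. rewrite g4 by lra. ring.
  - rewrite integral_RInt by exact X. rewrite R. rewrite !RIconst, RIscal by solve_ex.
    destruct (E_refl f Hc HE) as [E1 _]. rewrite E1. ring.
Qed.

Lemma odd_xE k : Nat.Odd k -> xE (pwm (1/2) k).
Proof.
  intros Hodd. destruct (inv_all k k (le_n _)) as [_ H]. unfold cls in H. destruct k as [|k].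
  - destruct Hodd; lia.
  - assert (Nat.even (S k) = false).
    { rewrite <- Nat.negb_odd, (proj2 (Nat.odd_spec _) Hodd). reflexivity. }
    rewrite H0 in H. apply H.
Qed.

Lemma sqrt_ge x : x >= 1/4 -> sqrt x >= 1/2.
Proof.
  intros H. apply Rle_ge. replace (1/2) with (sqrt (1/2 * (1/2))).
  apply sqrt_le_1_alt. lra. apply sqrt_square. lra.
Qed.

Theorem mainTheorem5 :
  (* (i) *)
  (L2inner (pwm (1/2) 0) gtest = 0 /\
   forall k : nat, Nat.Odd k -> L2inner (pwm (1/2) k) gtest = 0) /\
  (* (ii) *)
  (exists c : R, c > 0 /\
     forall (Np : nat) (gh : R -> R),
       is_L2_projection (1/2) Np gtest gh ->
       L2norm (fun t => gtest t - gh t) >= c) /\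
  (* in particular: the span of the p_k is not dense in L^2([0,1]) *)
  (exists f : R -> R, inhabited (Riemann_integrable (fun t => f t ^ 2) 0 1) /\
     exists eps : R, eps > 0 /\
       forall (N : nat) (a : nat -> R),
         L2norm (fun t => f t - pwm_comb (1/2) N a t) >= eps).
Proof.
  split; [split|split].
  - apply xE_gint. change (cont (fun _ => 1)). apply cont_const.
    intros t _. reflexivity.
  - intros k Hk. apply xE_gint. apply (inv_all k k (le_n _)). apply odd_xE; auto.
  - exists (1/2). split. lra. intros Np gh [[a Ha] _].
    destruct (lower Np a (fun t => gtest t - gh t)) as [X B].
    { intros t Ht. rewrite Ha by auto. reflexivity. }
    unfold L2norm. rewrite integral_RInt by exact X. apply sqrt_ge; auto.
  - exists gtest. split.
    + destruct (lower 0 (fun _ => 0) gtest) as [X _].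
      { intros t _. unfold pwm_comb. simpl. ring. }
      constructor. apply ex_RInt_Reals_0. exact X.
    + exists (1/2). split. lra. intros N a.
      destruct (lower N a (fun t => gtest t - pwm_comb (1/2) N a t)) as [X B].
      { intros; reflexivity. }
      unfold L2norm. rewrite integral_RInt by exact X. apply sqrt_ge; auto.
Qed.
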